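(* Let $m,n\ge2$, $D\in\mathcal{D}$ and $j\in\{1,\dots,n\}$. If the $j$-th column of $D$ has at most $m-2$ nonzero entries, then $\{D,\mathrm{U}_j\}$ is not $\mathcal{I}$-maximized.
   Context: Channels from $\{1,\dots,m\}$ to $\{1,\dots,n\}$ are $m\times n$ row-stochastic matrices; $\mathcal{D}$ is the set of deterministic (0-1) channels, $\mathrm{rank}(D)$ the matrix rank; $\mathrm{U}_j\in\mathcal{D}$ is the deterministic channel whose $j$-th column is all ones. For a channel $W$, $\Lambda(W)=\{\lambda\text{ probability distribution on }\mathcal{D}: W=\sum_D\lambda_DD\}$, $C_{11}(\lambda)=\sum_D\lambda_D\log_2\mathrm{rank}(D)$, $\overline{C}_{11}(W)=\sup_{\lambda\in\Lambda(W)}C_{11}(\lambda)$. A subset $S\subseteq\mathcal{D}$ is $\mathcal{I}$-maximized if there is a probability distribution $\lambda$ on $\mathcal{D}$ with $\mathrm{supp}(\lambda)=S$ and $C_{11}(\lambda)=\overline{C}_{11}(W)$ where $W=\sum_D\lambda_DD$. *)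

(* Defs.v *)
From HB Require Import structures.
From mathcomp Require Import all_boot all_order all_algebra.
From mathcomp Require Import all_classical all_reals all_analysis.
Set Implicit Arguments. Unset Strict Implicit. Unset Printing Implicit Defensive.
Import Order.TTheory GRing.Theory Num.Theory.
Local Open Scope ring_scope.

(* A deterministic channel from {1..m} to {1..n} is a 0-1 row-stochastic
   m x n matrix; it is determined by the function sending each row i to the
   unique column holding its 1.  We index the (finite) set D of deterministic
   channels by such functions. *)
Definition detchan (m n : nat) := {ffun 'I_m -> 'I_n}.

Definition detmx (R : realType) m n (D : detchan m n) : 'M[R]_(m, n) :=
  \matrix_(i < m, j < n) ((D i == j)%:R : R).

Definition Uchan m n (j : 'I_n) : detchan m n := [ffun _ => j].

Definition is_distr (R : realType) m n (lam : {ffun detchan m n -> R}) : Prop :=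
  (forall D, 0 <= lam D) /\ \sum_D lam D = 1.

Definition mixture (R : realType) m n (lam : {ffun detchan m n -> R}) : 'M[R]_(m, n) :=
  \sum_D lam D *: detmx R D.

Definition Lambda (R : realType) m n (W : 'M[R]_(m, n)) : set {ffun detchan m n -> R} :=
  [set lam | is_distr lam /\ W = mixture lam].

Definition log2 (R : realType) (x : R) : R := ln x / ln 2.

Definition C11 (R : realType) m n (lam : {ffun detchan m n -> R}) : R :=
  \sum_D lam D * log2 ((\rank (detmx R D))%:R).

Definition C11bar (R : realType) m n (W : 'M[R]_(m, n)) : R :=
  sup [set C11 lam | lam in Lambda W].

Definition supp (R : realType) m n (lam : {ffun detchan m n -> R}) : {set detchan m n} :=
  [set D | lam D != 0].

Definition I_maximized (R : realType) m n (S : {set detchan m n}) : Prop :=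
  exists lam : {ffun detchan m n -> R},
    is_distr lam /\ supp lam = S /\ C11 lam = C11bar (mixture lam).

(* Main.v *)
Require Import Defs.
From HB Require Import structures.
From mathcomp Require Import all_boot all_order all_algebra.
From mathcomp Require Import all_classical all_reals all_analysis.
From mathcomp Require Import lra zify.
Import Order.TTheory GRing.Theory Num.Theory.
Local Open Scope ring_scope.

Lemma sum_ind (T : finType) (R : pzRingType) (x : T) (F : T -> R) :
  \sum_i (i == x)%:R * F i = F x.
Proof.
rewrite (bigD1 x) //= eqxx mul1r big1 ?addr0 // => i /negbTE ->; by rewrite mul0r.
Qed.

Lemma sum_indZ (T : finType) (R : pzRingType) (V : lmodType R) (x : T) (F : T -> V) :
  \sum_i (i == x)%:R *: F i = F x.
Proof.
rewrite (bigD1 x) //= eqxx scale1r big1 ?addr0 // => i /negbTE ->; by rewrite scale0r.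
Qed.

Lemma detmxE (R : realType) m n (E : detchan m n) i c : detmx R E i c = (E i == c)%:R.
Proof. by rewrite mxE. Qed.

Lemma rank_onerow (F : fieldType) m n (X : 'M[F]_(m, n)) i1 :
  (forall i c, i != i1 -> X i c = 0) -> (\rank X <= 1)%N.
Proof.
move=> H.
have -> : X = (\col_i ((i == i1)%:R : F)) *m (\row_c X i1 c).
  apply/matrixP => i c; rewrite !mxE big_ord1 !mxE.
  by case: eqVneq => [->|/H ->]; rewrite ?mul1r ?mul0r.
exact: leq_trans (mxrankM_maxr _ _) (rank_leq_row _).
Qed.

Lemma rank_U (R : realType) m n (j : 'I_n) : (\rank (detmx R (Uchan m j)) <= 1)%N.
Proof.
have -> : detmx R (Uchan m j) = (const_mx 1 : 'cV[R]_m) *m (\row_c ((j == c)%:R : R)).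
  by apply/matrixP => i c; rewrite !mxE big_ord1 !mxE ffunE mul1r.
exact: leq_trans (mxrankM_maxr _ _) (rank_leq_row _).
Qed.

Lemma rank_ge2 (R : realType) m n (E : detchan m n) i1 i2 :
  E i1 != E i2 -> (2 <= \rank (detmx R E))%N.
Proof.
move=> Hne.
pose s (k : 'I_2) := if k == ord0 then i1 else i2.
have sinj : forall k l : 'I_2, (E (s k) == E (s l)) = (k == l).
  move=> k l; rewrite /s.
  case: k => [[|[|k]] Hk] //; case: l => [[|[|l]] Hl] //=; rewrite ?eqxx //.
  by rewrite (negbTE Hne). by rewrite eq_sym (negbTE Hne).
pose S := \matrix_(k < 2, i < m) ((i == s k)%:R : R).
pose T := \matrix_(c < n, l < 2) ((E (s l) == c)%:R : R).
have HI : S *m detmx R E *m T = 1%:M.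
  apply/matrixP => k l; rewrite !mxE.
  under eq_bigr => c _ do rewrite mxE.
  under eq_bigr => c _ do (under eq_bigr => i _ do rewrite /S /T !mxE; rewrite sum_ind /T mxE).
  under eq_bigr => c _ do rewrite (eq_sym (E (s k))).
  by rewrite sum_ind sinj eq_sym.
have := mxrankM_maxl (S *m detmx R E) T; rewrite HI mxrank1 => h.
exact: leq_trans h (mxrankM_maxr _ _).
Qed.
Lemma ln_key (R : realType) (r r1 r2 rU : nat) :
  (r <= r1 + 1)%N -> (2 <= r1)%N -> (2 <= r2)%N -> (rU <= 1)%N ->
  0 < log2 (r1%:R : R) + log2 (r2%:R : R) - log2 (r%:R : R) - log2 (rU%:R : R).
Proof.
move=> h1 h2 h3 h4.
have ln2 : 0 < ln (2 : R) by apply: ln_gt0; rewrite ltr1n.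
have lnU : ln (rU%:R : R) = 0.
  move: h4; case: rU => [|[|//]] _; first by rewrite ln0.
  by rewrite ln1.
have hlt : (r < r1 * r2)%N by nia.
have key : ln (r%:R : R) < ln (r1%:R : R) + ln (r2%:R : R).
  rewrite -lnM ?posrE ?ltr0n; [|lia|lia].
  rewrite -natrM.
  case: (posnP r) => [->|h0].
    rewrite ln0 // ln_gt0 // ltr1n; nia.
  by rewrite ltr_ln ?posrE ?ltr0n ?ltr_nat //; nia.
rewrite /log2 lnU mul0r subr0 -!mulrDl -mulrBl divr_gt0 // subr_gt0 //.
Qed.


Lemma lin_sum (R : realType) m n (lam : {ffun detchan m n -> R}) (t : R)
  (X1 X2 X3 X4 : detchan m n) (V : lmodType R) (F : detchan m n -> V) :
  \sum_E ([ffun E => lam E + t * ((E == X1)%:R + (E == X2)%:R - (E == X3)%:R - (E == X4)%:R)] E) *: F E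
  = \sum_E lam E *: F E + t *: (F X1 + F X2 - F X3 - F X4).
Proof.
under eq_bigr do rewrite ffunE scalerDl -scalerA !scalerBl scalerDl.
by rewrite big_split /= -scaler_sumr !sumrB big_split /= !sum_indZ.
Qed.

Lemma lin_sumR (R : realType) m n (lam : {ffun detchan m n -> R}) (t : R)
  (X1 X2 X3 X4 : detchan m n) (F : detchan m n -> R) :
  \sum_E ([ffun E => lam E + t * ((E == X1)%:R + (E == X2)%:R - (E == X3)%:R - (E == X4)%:R)] E) * F E
  = \sum_E lam E * F E + t * (F X1 + F X2 - F X3 - F X4).
Proof.
under eq_bigr do rewrite ffunE mulrDl -mulrA !mulrBl mulrDl.
by rewrite big_split /= -mulr_sumr !sumrB big_split /= !sum_ind.
Qed.

Theorem proposition6 (R : realType) (m n : nat) (hm : (2 <= m)%N) (hn : (2 <= n)%N)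
  (D : detchan m n) (j : 'I_n) :
  (#|[set i : 'I_m | detmx R D i j != 0%R]| <= m - 2)%N ->
  ~ I_maximized R [set D; Uchan m j].
Proof.
move=> Hc [lam [[lam0 lam1] [Hs HC]]].
set U := Uchan m j in Hs.
set S := [set i : 'I_m | detmx R D i j != 0%R] in Hc.
have : (1 < #|~: S|)%N.
  by have := cardsC S; rewrite card_ord; lia.
move=> /card_gt1P [i1 [i2 [Hi1 Hi2 Hne]]].
have nj : forall i, i \in ~: S -> D i != j.
  by move=> i; rewrite !inE negbK mxE pnatr_eq0 eqb0.
have Di1 := nj _ Hi1; have Di2 := nj _ Hi2.
have DU : D != U.
  apply/eqP => h; move: Di1; by rewrite h /U ffunE eqxx.
pose D1 : detchan m n := [ffun i => if i == i1 then j else D i].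
pose D2 : detchan m n := [ffun i => if i == i1 then D i1 else j].
have hD : lam D != 0.
  have : D \in supp lam by rewrite Hs !inE eqxx.
  by rewrite inE.
have hU : lam U != 0.
  have : U \in supp lam by rewrite Hs !inE eqxx orbT.
  by rewrite inE.
have pD : 0 < lam D by rewrite lt0r hD lam0.
have pU : 0 < lam U by rewrite lt0r hU lam0.
pose t := Num.min (lam D) (lam U).
have tpos : 0 < t by rewrite lt_min pD pU.
have tD : t <= lam D by rewrite ge_min lexx.
have tU : t <= lam U by rewrite ge_min lexx orbT.
pose lam' := [ffun E => lam E + t * ((E == D1)%:R + (E == D2)%:R - (E == D)%:R - (E == U)%:R)].
have HE : detmx R D1 + detmx R D2 = detmx R D + detmx R U.
  apply/matrixP => i c; rewrite !mxE !ffunE.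
  by case: ifP => [/eqP ->|]; rewrite // addrC.
have Hmix : mixture lam' = mixture lam.
  rewrite /mixture lin_sum HE -addrA -opprD subrr scaler0 addr0 //.
have Hdis : is_distr lam'.
  split.
    move=> E; rewrite ffunE.
    have l0 := lam0 E.
    have bb : forall X Y : detchan m n, 0 <= ((X == Y)%:R : R) by move=> X Y; exact: ler0n.
    have b1 := bb E D1; have b2 := bb E D2.
    case: (eqVneq E D) => [ED|ED].
      move: b1 b2; rewrite ED ?(negbTE DU) ?eqxx /=.
      set a1 := (_ == D1)%:R; set a2 := (_ == D2)%:R => b1 b2.
      rewrite ?mulr1n ?mulr0n; nra.
    case: (eqVneq E U) => [EU|EU].
      move: b1 b2; rewrite EU /=.
      set a1 := (_ == D1)%:R; set a2 := (_ == D2)%:R => b1 b2.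
      rewrite ?mulr1n ?mulr0n; nra.
    move: b1 b2; rewrite /=.
    set a1 := (_ == D1)%:R; set a2 := (_ == D2)%:R => b1 b2.
    rewrite ?mulr1n ?mulr0n; nra.
  have := @lin_sumR R m n lam t D1 D2 D U (fun _ => 1).
  under eq_bigr do rewrite mulr1.
  under [in X in _ = X -> _]eq_bigr do rewrite mulr1.
  by move=> ->; rewrite lam1 addrK subrr mulr0 addr0.
have Hne' : (i2 == i1) = false by rewrite eq_sym (negbTE Hne).
have r1ge : (2 <= \rank (detmx R D1))%N.
  apply: (@rank_ge2 R m n D1 i1 i2).
  by rewrite !ffunE eqxx Hne' eq_sym.
have r2ge : (2 <= \rank (detmx R D2))%N.
  apply: (@rank_ge2 R m n D2 i1 i2).
  by rewrite !ffunE eqxx Hne'.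
have rle : (\rank (detmx R D) <= \rank (detmx R D1) + 1)%N.
  have -> : detmx R D = detmx R D1 + (detmx R D - detmx R D1) by rewrite addrC subrK.
  apply: leq_trans (mxrank_add _ _) _; rewrite leq_add2l.
  apply: (@rank_onerow _ _ _ _ i1) => i c Hi.
  by rewrite !mxE ffunE (negbTE Hi) subrr.
have rUle := @rank_U R m n j.
pose g (E : detchan m n) := log2 ((\rank (detmx R E))%:R : R).
have gpos : 0 < g D1 + g D2 - g D - g U by exact: ln_key.
have HC' : C11 lam' = C11 lam + t * (g D1 + g D2 - g D - g U).
  by rewrite /C11 lin_sumR.
have Hin : [set C11 l | l in Lambda (mixture lam)]%classic (C11 lam').
  by exists lam' => //; split => //; rewrite Hmix.
have Hsup : has_sup [set C11 l | l in Lambda (mixture lam)]%classic.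
  split; first by exists (C11 lam').
  exists (\sum_E `|g E|) => _ [l [[l0 l1] _] <-].
  rewrite /C11; apply: ler_sum => E _.
  have le1 : l E <= 1.
    by rewrite -l1 (bigD1 E) //= lerDl sumr_ge0.
  apply: le_trans (ler_piMl (normr_ge0 _) le1).
  by apply: ler_wpM2l => //; exact: ler_norm.
have := sup_upper_bound Hsup Hin.
rewrite -/(C11bar (mixture lam)) -HC HC'.
have : 0 < t * (g D1 + g D2 - g D - g U) by apply: mulr_gt0.
lra.
Qed.
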